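(* Consider the binary-symmetric parallel-relay (BSPR) network with $K\ge 1$ relays. Its capacity satisfies $C \leq R_\textnormal{ub}$, where \[ R_\textnormal{ub} = \min \left\{ \max_{p(u)} I(U;\bar{V}),\; K - \sum_{i=1}^K H(p_{i,d}) \right\}, \] where $\bar V=(V_1,\dots,V_K)$ with $V_i=U\oplus Z_i$ (single-letter), the $Z_i$ independent of each other and of $U$, $Z_i\sim\mathrm{Bernoulli}(p_{s,i})$, and the maximum is over distributions of $U\in\{0,1\}$.
   Context: BSPR network with $K$ relays: a source, relays $1,\dots,K$, and a destination. At each network use $t$, the source sends $U[t]\in\{0,1\}$; relay $i$ receives $V_i[t]=U[t]\oplus Z_i[t]$ with $\Pr\{Z_i=1\}=p_{s,i}$, $0\le p_{s,i}\le 1/2$; relay $i$ sends $X_i[t]\in\{0,1\}$ and the destination receives $Y_i[t]=X_i[t]\oplus E_i[t]$ with $\Pr\{E_i=1\}=p_{i,d}$, $0\le p_{i,d}\le 1/2$ ($\oplus$ is addition mod 2). All $Z_i,E_i$ are mutually independent and i.i.d. over network uses. An $(M,n)$ code consists of a message $W$ uniform on $\{0,\dots,M-1\}$, a source encoder $(U[1],\dots,U[n])=f_S(W)$, relay encoders $X_i[t]=f_{i,t}(V_i[1],\dots,V_i[t-1])$ for $t=1,\dots,n$, and a decoder $\hat W=g(\boldsymbol Y_1,\dots,\boldsymbol Y_K)$ where $\boldsymbol Y_i=(Y_i[1],\dots,Y_i[n])$. Its rate is $(\log_2 M)/n$ and its average error probability is $P_e=\frac1M\sum_w\Pr\{\hat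 W\ne w\mid W=w\}$. A rate $R$ is achievable if for every $\epsilon>0$ there exists, for all sufficiently large $n$, a $(2^{nR},n)$ code with $P_e\le\epsilon$; the capacity $C$ is the supremum of achievable rates. $H(p)=-p\log_2 p-(1-p)\log_2(1-p)$ with $H(0)=0$. *)

(* Defs.v *)
From HB Require Import structures.
From mathcomp Require Import all_boot all_order all_algebra.
From mathcomp Require Import all_classical all_reals all_analysis.
Set Implicit Arguments. Unset Strict Implicit. Unset Printing Implicit Defensive.
Import Order.TTheory GRing.Theory Num.Theory.
Local Open Scope ring_scope.
Local Open Scope classical_set_scope.

Section BSPR.
Variable R : realType.

Definition log2 (x : R) : R := ln x / ln 2.

Definition xlog2 (x : R) : R := if x == 0 then 0 else x * log2 x.

Definition Hb (p : R) : R := - xlog2 p - xlog2 (1 - p).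

Definition bern (p : R) (b : bool) : R := if b then p else 1 - p.

(* U ~ Bernoulli(q), V_i = U xor Z_i, Z_i ~ Bernoulli(ps i) independent. *)
Definition jointUV (K : nat) (ps : 'I_K -> R) (q : R) (u : bool)
  (v : {ffun 'I_K -> bool}) : R :=
  bern q u * \prod_(i < K) bern (ps i) (addb u (v i)).

Definition margV (K : nat) (ps : 'I_K -> R) (q : R) (v : {ffun 'I_K -> bool}) : R :=
  \sum_(u : bool) jointUV ps q u v.

Definition mutual_info_UV (K : nat) (ps : 'I_K -> R) (q : R) : R :=
  \sum_(u : bool) \sum_(v : {ffun 'I_K -> bool})
    (if jointUV ps q u v == 0 then 0
     else jointUV ps q u v *
          log2 (jointUV ps q u v / (bern q u * margV ps q v))).

(* R_ub = min { max_{p(u)} I(U; Vbar), K - sum_i H(p_{i,d}) } ;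
   the maximum over distributions of U in {0,1}, i.e. over q in [0,1],
   is written as a supremum (it is attained). *)
Definition Rub (K : nat) (ps pd : 'I_K -> R) : R :=
  Num.min (sup [set x | exists2 q : R, 0 <= q <= 1 & x = mutual_info_UV ps q])
          (K%:R - \sum_(i < K) Hb (pd i)).

(* network-use index t : 'I_n (t = 0 is the first use) *)
Definition noise (K n : nat) := {ffun 'I_K * 'I_n -> bool}.

(* An (M,n) code: source encoder, relay encoders, decoder.
   relay i t is applied to the received sequence truncated to positions < t,
   so X_i[t] depends only on V_i[1..t-1] (strict causality). *)
Record code (K M n : nat) := Code {
  src_enc : 'I_M -> 'I_n -> bool;
  relay_enc : 'I_K -> 'I_n -> {ffun 'I_n -> bool} -> bool;
  decoder : noise K n -> 'I_M
}.

Definition trunc (n : nat) (t : 'I_n) (v : {ffun 'I_n -> bool}) : {ffun 'I_n -> bool} :=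
  [ffun s : 'I_n => if (s < t)%N then v s else false].

Definition relay_in K M n (c : code K M n) (w : 'I_M) (z : noise K n) (i : 'I_K)
  : {ffun 'I_n -> bool} :=
  [ffun t : 'I_n => addb (src_enc c w t) (z (i, t))].

Definition dest_out K M n (c : code K M n) (w : 'I_M) (z e : noise K n) : noise K n :=
  [ffun it : 'I_K * 'I_n =>
     addb (relay_enc c it.1 it.2 (trunc it.2 (relay_in c w z it.1))) (e it)].

Definition noise_prob K n (p : 'I_K -> R) (z : noise K n) : R :=
  \prod_(it : 'I_K * 'I_n) bern (p it.1) (z it).

Definition err_prob K M n (ps pd : 'I_K -> R) (c : code K M n) : R :=
  M%:R^-1 * \sum_(w < M) \sum_(z : noise K n) \sum_(e : noise K n)
     noise_prob ps z * noise_prob pd e * (decoder c (dest_out c w z e) != w)%:R.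

Definition achievable (K : nat) (ps pd : 'I_K -> R) (rate : R) : Prop :=
  forall eps : R, 0 < eps ->
  exists N : nat, forall n : nat, (N <= n)%N ->
  exists (M : nat) (c : code K M n),
    (2 : R) `^ (n%:R * rate) <= M%:R /\ err_prob ps pd c <= eps.

Definition capacity (K : nat) (ps pd : 'I_K -> R) : R :=
  sup [set r | achievable ps pd r].

End BSPR.

(* Main.v *)
Require Import Defs.
From HB Require Import structures.
From mathcomp Require Import all_boot all_order all_algebra.
From mathcomp Require Import all_classical all_reals all_analysis.
From mathcomp Require Import ring lra.
Import Order.TTheory GRing.Theory Num.Theory.
Local Open Scope ring_scope.


Section Info.
Variable R : realType.

Definition dterm (x y : R) : R := if x == 0 then 0 else x * log2 (x / y).

Lemma ln2_gt0 : 0 < ln (2 : R).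
Proof. apply: ln_gt0; lra. Qed.

Lemma ln_le_sub1 (y : R) : 0 < y -> ln y <= y - 1.
Proof.
move=> y0; have := @le_ln1Dx R (y - 1); rewrite addrCA subrr addr0; apply; lra.
Qed.

Lemma dterm_ge (x y c : R) : 0 <= x -> 0 <= y -> (x != 0 -> 0 < y) -> 0 < c ->
  (x * (1 - ln c) - y / c) / ln 2 <= dterm x y.
Proof.
move=> x0 y0 hxy c0; rewrite /dterm /log2.
have l2 := ln2_gt0.
case: eqP => [->|/eqP xn0].
  rewrite mul0r add0r ler_pdivrMr // mul0r oppr_le0 divr_ge0 //; exact: ltW.
have yp := hxy xn0.
have xp : 0 < x by rewrite lt_def xn0 x0.
rewrite mulrA ler_pM2r ?invr_gt0 //.
have h := ln_le_sub1 (y / (c * x)).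
have hp : 0 < y / (c * x) by rewrite divr_gt0 // mulr_gt0.
have := h hp.
rewrite ln_div ?posrE ?mulr_gt0 // lnM ?posrE // ln_div ?posrE //.
move=> H.
have : x * (ln y - (ln c + ln x)) <= x * (y / (c * x) - 1) by rewrite ler_pM2l.
have -> : x * (y / (c * x) - 1) = y / c - x.
  by field; rewrite gt_eqF //= gt_eqF.
lra.
Qed.

End Info.
Arguments dterm {R}. Arguments dterm_ge {R x y c}. Arguments ln2_gt0 {R}. Arguments ln_le_sub1 {R}.

Set Implicit Arguments. Unset Strict Implicit.

Section Fano.
Variable R : realType.

Lemma le_trans_r (a b c : R) : b <= c -> a <= b -> a <= c.
Proof. by move=> h1 h2; apply: le_trans h2 h1. Qed.

Lemma letr (a b c : R) : a <= b -> b <= c -> a <= c.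
Proof. by move=> h1 h2; apply: le_trans h1 h2. Qed.

Lemma sum_pick (O : finType) (x : O) (F : O -> R) :
  \sum_o F o * (x == o)%:R = F x.
Proof.
rewrite (bigD1 x) //= eqxx mulr1 big1 ?addr0 // => o /negbTE.
by rewrite eq_sym => ->; rewrite mulr0.
Qed.

Lemma push_sum (O W : finType) (rho : W -> R) (Phi : W -> O) (P : O -> R)
  (hP : forall o, P o = \sum_om rho om * (Phi om == o)%:R) (h : O -> R) :
  \sum_o P o * h o = \sum_om rho om * h (Phi om).
Proof.
under eq_bigr do rewrite hP big_distrl /=.
rewrite exchange_big /=; apply: eq_bigr => om _.
under eq_bigr do rewrite -mulrA (mulrC _ (h _)) mulrA.
by rewrite sum_pick.
Qed.

Lemma fano_gen (M : nat) (O W : finType) (rho : W -> R) (Phi : 'I_M -> W -> O)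
  (g : O -> 'I_M) (Q : O -> R) (P : 'I_M -> O -> R) :
  (0 < M)%N ->
  (forall om, 0 <= rho om) -> \sum_om rho om = 1 ->
  (forall o, 0 <= Q o) -> \sum_o Q o <= 1 ->
  (forall w o, P w o = \sum_om rho om * (Phi w om == o)%:R) ->
  (forall w o, P w o != 0 -> 0 < Q o) ->
  (M%:R^-1 * \sum_w \sum_om rho om * (g (Phi w om) == w)%:R) * log2 M%:R - 1
   <= M%:R^-1 * \sum_w \sum_o dterm (P w o) (Q o).
Proof.
move=> M0 rho0 rho1 Q0 Q1 hP hPQ.
have l2 := @ln2_gt0 R.
have Mp : (0 : R) < M%:R by rewrite ltr0n.
have P0 : forall w o, 0 <= P w o.
  move=> w o; rewrite hP; apply: sumr_ge0 => om _; apply: mulr_ge0 => //.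
pose L w o := (P w o * (1 - ln 2) + ln M%:R * (P w o * (g o == w)%:R)
     - Q o * ((g o == w)%:R * (M%:R / 2) + 2^-1)) / ln 2.
have pt : forall w o, L w o <= dterm (P w o) (Q o).
  move=> w o; rewrite /L.
  case: eqP => [_|_].
    have c0 : (0:R) < 2 / M%:R by rewrite divr_gt0.
    apply: (le_trans_r (dterm_ge (P0 w o) (Q0 o) (hPQ w o) c0)).
    rewrite ler_pM2r ?invr_gt0 // ln_div ?posrE // invf_div.
    rewrite mulr1 mul1r mulrDr; have : 0 <= Q o * 2^-1 by rewrite mulr_ge0 // invr_ge0. lra.
  have c0 : (0:R) < 2 by [].
  apply: (le_trans_r (dterm_ge (P0 w o) (Q0 o) (hPQ w o) c0)).
  rewrite ler_pM2r ?invr_gt0 // !mul0r !mulr0 add0r addr0; lra.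
have sP : forall w (h : O -> R), \sum_o P w o * h o = \sum_om rho om * h (Phi w om).
  by move=> w h; apply: push_sum.
have key : forall w, \sum_o L w o =
   ((1 - ln 2) + ln M%:R * (\sum_om rho om * (g (Phi w om) == w)%:R)
     - \sum_o Q o * ((g o == w)%:R * (M%:R / 2) + 2^-1)) / ln 2.
  move=> w; rewrite /L -big_distrl /=; congr (_ / _).
  rewrite big_split /= big_split /= -big_distrr /= -big_distrl /=.
  have e1 : \sum_o P w o = 1.
    by have := sP w (fun=> 1); under eq_bigr do rewrite mulr1;
       under [in RHS]eq_bigr do rewrite mulr1; rewrite rho1.
  by rewrite e1 mul1r (sP w (fun o => (g o == w)%:R)) sumrN.
have Qs : \sum_w \sum_o Q o * ((g o == w)%:R * (M%:R / 2) + 2^-1)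
          = \sum_o Q o * (M%:R / 2 + M%:R / 2).
  rewrite exchange_big /=; apply: eq_bigr => o _.
  rewrite -big_distrr /=; congr (_ * _).
  rewrite big_split /= sumr_const card_ord -big_distrl /=.
  have h1 : \sum_(i < M) ((g o == i)%:R : R) = 1.
    by transitivity (\sum_(i < M) (1:R) * (g o == i)%:R); [apply: eq_bigr => i _; rewrite mul1r | exact: sum_pick].
  by rewrite h1 mul1r -mulr_natr; field.
have Qb : \sum_o Q o * (M%:R / 2 + M%:R / 2) <= M%:R.
  rewrite -big_distrl /=; have -> : M%:R / 2 + M%:R / 2 = M%:R :> R by field.
  by rewrite -[leRHS]mul1r ler_pM2r.
have hL : M%:R^-1 * \sum_w \sum_o L w o <= M%:R^-1 * \sum_w \sum_o dterm (P w o) (Q o).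
  rewrite ler_pM2l ?invr_gt0 //; apply: ler_sum => w _; apply: ler_sum => j _.
  exact: pt.
apply: (le_trans_r hL).
rewrite (eq_bigr _ (fun w _ => key w)) -big_distrl /=.
rewrite big_split /= sumrN big_split /= sumr_const card_ord -big_distrr /= Qs.
set S := \sum_w _.
set T := \sum_o _ in Qb *.
have hT : M%:R^-1 * T <= 1 by rewrite ler_pdivrMl // mulr1.
rewrite -subr_ge0 /log2.
have -> : M%:R^-1 * (((1 - ln 2) *+ M + ln M%:R * S - T) / ln 2) -
   (M%:R^-1 * S * (ln M%:R / ln 2) - 1) = (1 - M%:R^-1 * T) / ln 2.
  by rewrite -mulr_natr; field; rewrite !gt_eqF.
by rewrite divr_ge0 ?subr_ge0 // ltW.
Qed.

End Fano.


Section Prod.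
Variable R : realType.

Lemma prod_sum1 (J X : finType) (p : J -> X -> R) :
  (forall j, \sum_x p j x = 1) -> \sum_(f : {ffun J -> X}) \prod_j p j (f j) = 1.
Proof. by move=> h; rewrite -bigA_distr_bigA big1. Qed.

Lemma marg1 (J X : finType) (p : J -> X -> R) (j0 : J) (G : X -> R) :
  (forall j, \sum_x p j x = 1) ->
  \sum_(f : {ffun J -> X}) (\prod_j p j (f j)) * G (f j0) = \sum_x p j0 x * G x.
Proof.
move=> h.
pose p' j x := if j == j0 then p j x * G x else p j x.
transitivity (\sum_(f : {ffun J -> X}) \prod_j p' j (f j)).
  apply: eq_bigr => f _.
  rewrite (bigD1 j0) //= [in RHS](bigD1 j0) //= /p' eqxx.
  rewrite mulrAC; congr (_ * _); apply: eq_bigr => j /negbTE ->; done.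
rewrite -bigA_distr_bigA (bigD1 j0) //= [X in _ * X]big1 ?mulr1.
  by apply: eq_bigr => x _; rewrite /p' eqxx.
by move=> j /negbTE hj; under eq_bigr do rewrite /p' hj; apply: h.
Qed.

Lemma marg_sum (J X : finType) (p : J -> X -> R) (G : J -> X -> R) :
  (forall j, \sum_x p j x = 1) ->
  \sum_(f : {ffun J -> X}) (\prod_j p j (f j)) * \sum_j G j (f j)
   = \sum_j \sum_x p j x * G j x.
Proof.
move=> h.
under eq_bigr do rewrite big_distrr /=.
rewrite exchange_big /=; apply: eq_bigr => j _.
exact: (marg1 j (G j) h).
Qed.

Lemma ln_prod (I : finType) (a : I -> R) :
  (forall i, 0 < a i) -> ln (\prod_i a i) = \sum_i ln (a i).
Proof.
move=> h.
have : 0 < \prod_i a i /\ ln (\prod_i a i) = \sum_i ln (a i).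
  apply: (big_rec2 (fun x y => 0 < x /\ ln x = y)).
    by rewrite ln1.
  move=> i y x _ [xp <-]; split; first by rewrite mulr_gt0.
  by rewrite lnM ?posrE.
by case.
Qed.

Lemma dterm_prod (J X : finType) (p m : J -> X -> R) :
  (forall j x, 0 <= p j x) -> (forall j, \sum_x p j x = 1) ->
  (forall j x, p j x != 0 -> 0 < m j x) ->
  \sum_(f : {ffun J -> X}) dterm (\prod_j p j (f j)) (\prod_j m j (f j))
   = \sum_j \sum_x dterm (p j x) (m j x).
Proof.
move=> p0 p1 pm.
pose G j x := if p j x == 0 then 0 else log2 (p j x / m j x).
transitivity (\sum_(f : {ffun J -> X}) (\prod_j p j (f j)) * \sum_j G j (f j)).
  apply: eq_bigr => f _; rewrite /dterm.
  case: eqP => [->|/eqP hne]; first by rewrite mul0r.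
  congr (_ * _).
  have nz : forall j, p j (f j) != 0.
    by move=> j; apply/eqP => hj; move: hne; rewrite (bigD1 j) //= hj mul0r eqxx.
  have pos : forall j, 0 < p j (f j) / m j (f j).
    move=> j; rewrite divr_gt0 //; last exact: pm.
    by rewrite lt_def nz p0.
  rewrite -prodf_div /log2 ln_prod // big_distrl /=; apply: eq_bigr => j _.
  by rewrite /G (negbTE (nz j)).
rewrite marg_sum //; apply: eq_bigr => j _; apply: eq_bigr => x _.
by rewrite /G /dterm; case: eqP => [->|]; rewrite ?mul0r.
Qed.

End Prod.


Section Basics.
Variable R : realType.

Lemma sum_pair (A B : finType) (F : A * B -> R) :
  \sum_p F p = \sum_a \sum_b F (a, b).
Proof. by rewrite pair_bigA; apply: eq_bigr => -[]. Qed.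

Lemma prod_pair (A B : finType) (F : A * B -> R) :
  \prod_p F p = \prod_a \prod_b F (a, b).
Proof. by rewrite pair_bigA; apply: eq_bigr => -[]. Qed.

Lemma dtermZ (r x y : R) : 0 <= r -> dterm (r * x) (r * y) = r * dterm x y.
Proof.
move=> r0; rewrite /dterm.
have [->|rn0] := eqVneq r 0; first by rewrite !mul0r eqxx.
rewrite mulf_eq0 (negbTE rn0) /=.
case: eqP => _; first by rewrite mulr0.
have -> : r * x / (r * y) = x / y by rewrite invfM mulrACA divff // mul1r.
by rewrite mulrA.
Qed.

Lemma bern_ge0 (p : R) b : 0 <= p <= 1 -> 0 <= bern p b.
Proof. by case/andP=> h1 h2; case: b => //=; rewrite subr_ge0. Qed.

Lemma bern_sum (p : R) : \sum_b bern p b = 1.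
Proof. by rewrite big_bool /=; ring. Qed.

Lemma bern_sumx (p : R) u : \sum_b bern p (addb u b) = 1.
Proof. by rewrite big_bool; case: u => /=; ring. Qed.

Definition xorf (T : finType) (a b : {ffun T -> bool}) : {ffun T -> bool} :=
  [ffun i => addb (a i) (b i)].

Lemma xorfK (T : finType) (a b : {ffun T -> bool}) : xorf a (xorf a b) = b.
Proof. by apply/ffunP => i; rewrite !ffunE addKb. Qed.

Lemma xorf_eq (T : finType) (a b y : {ffun T -> bool}) :
  (xorf a b == y) = (b == xorf a y).
Proof.
apply/eqP/eqP => [<-|->]; last exact: xorfK.
by rewrite xorfK.
Qed.

Lemma noise_prob_ge0 K n (p : 'I_K -> R) z :
  (forall i, 0 <= p i <= 1) -> 0 <= noise_prob (n:=n) p z.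
Proof. by move=> h; apply: prodr_ge0 => it _; apply: bern_ge0. Qed.

Lemma noise_prob_sum K n (p : 'I_K -> R) :
  \sum_(z : noise K n) noise_prob p z = 1.
Proof. by apply: (prod_sum1 (p := fun it b => bern (p it.1) b)) => it; apply: bern_sum. Qed.

End Basics.


Section Bound1.
Variable R : realType.
Variables (K M n : nat) (c : Defs.code K M n) (ps pd : 'I_K -> R).
Hypothesis hps : forall i, 0 <= ps i <= 1.
Hypothesis hpd : forall i, 0 <= pd i <= 1.

Definition relay_out w (z : noise K n) : noise K n :=
  [ffun it => relay_enc c it.1 it.2 (trunc it.2 (relay_in c w z it.1))].

Lemma dest_outE w z e : dest_out c w z e = xorf (relay_out w z) e.
Proof. by apply/ffunP => it; rewrite !ffunE. Qed.

Definition rho (om : noise K n * noise K n) : R := noise_prob ps om.1 * noise_prob pd om.2.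
Definition Phi1 (w : 'I_M) (om : noise K n * noise K n) := (om.1, dest_out c w om.1 om.2).
Definition g1 (o : noise K n * noise K n) := decoder c o.2.
Definition Q1 (o : noise K n * noise K n) : R :=
  noise_prob ps o.1 * \prod_(it : 'I_K * 'I_n) (2^-1 : R).
Definition P1 (w : 'I_M) (o : noise K n * noise K n) : R :=
  noise_prob ps o.1 * noise_prob pd (xorf (relay_out w o.1) o.2).

Lemma rho_ge0 om : 0 <= rho om.
Proof. by rewrite mulr_ge0 // noise_prob_ge0. Qed.

Lemma rho_sum : \sum_om rho om = 1.
Proof.
rewrite sum_pair; under eq_bigr do rewrite /rho /= -big_distrr /= noise_prob_sum mulr1.
exact: noise_prob_sum.
Qed.

Lemma hP1 w o : P1 w o = \sum_om rho om * (Phi1 w om == o)%:R.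
Proof.
case: o => z' y; rewrite sum_pair /P1 /=.
transitivity (\sum_z noise_prob ps z * (z == z')%:R *
    \sum_e noise_prob pd e * (e == xorf (relay_out w z) y)%:R).
  rewrite (bigD1 z') //= eqxx mulr1 [X in _ + X]big1 ?addr0; last first.
    by move=> z hz; rewrite (negbTE hz) mulr0 mul0r.
  by congr (_ * _); under eq_bigr do rewrite eq_sym; rewrite sum_pick.
apply: eq_bigr => z _; rewrite big_distrr /=; apply: eq_bigr => e _.
rewrite /rho /Phi1 /= xpair_eqE dest_outE xorf_eq.
by case: (z == z'); case: (e == _); rewrite /= ?mulr0 ?mulr1 ?mul0r.
Qed.

Lemma half_prod_pos : 0 < \prod_(it : 'I_K * 'I_n) (2^-1 : R).
Proof. by apply: prodr_gt0 => it _; rewrite invr_gt0. Qed.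

Lemma half_prod_sum : \sum_(y : noise K n) \prod_(it : 'I_K * 'I_n) (2^-1 : R) = 1.
Proof.
apply: (prod_sum1 (p := fun (it : 'I_K * 'I_n) (b : bool) => (2^-1 : R))) => it.
by rewrite big_bool /=; field.
Qed.

Lemma Q1_ge0 o : 0 <= Q1 o.
Proof. by rewrite mulr_ge0 ?noise_prob_ge0 // ltW // half_prod_pos. Qed.

Lemma Q1_sum : \sum_o Q1 o = 1.
Proof.
rewrite sum_pair; under eq_bigr do rewrite /Q1 /= -big_distrr /= half_prod_sum mulr1.
exact: noise_prob_sum.
Qed.

Lemma hpos1 w o : P1 w o != 0 -> 0 < Q1 o.
Proof.
rewrite /P1 /Q1 mulf_eq0 negb_or => /andP[h _].
by rewrite mulr_gt0 ?half_prod_pos // lt_def h noise_prob_ge0.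
Qed.

Lemma dterm_half1 (x : R) : 0 <= x -> dterm x 2^-1 = xlog2 x + x.
Proof.
move=> x0; rewrite /dterm /xlog2; case: eqP => [->|/eqP hx]; first by rewrite addr0.
have xp : 0 < x by rewrite lt_def hx x0.
have l2 := @ln2_gt0 R.
rewrite invrK /log2 lnM ?posrE //; field; rewrite gt_eqF //.
Qed.

Lemma dterm_half (p : R) : 0 <= p <= 1 ->
  \sum_b dterm (bern p b) 2^-1 = 1 - Hb p.
Proof.
move=> hp; rewrite big_bool /= !dterm_half1 ?(bern_ge0 _ hp) //; last first.
  by case/andP: hp.
  by case/andP: hp => _; rewrite subr_ge0.
rewrite /Hb; ring.
Qed.

Lemma dsum_noise : \sum_(e : noise K n) dterm (noise_prob pd e)
     (\prod_(it : 'I_K * 'I_n) (2^-1 : R)) = n%:R * (K%:R - \sum_i Hb (pd i)).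
Proof.
transitivity (\sum_(it : 'I_K * 'I_n) \sum_b dterm (bern (pd it.1) b) (2^-1 : R)).
  apply: (dterm_prod (p := fun (it : 'I_K * 'I_n) b => bern (pd it.1) b)
                     (m := fun _ _ => (2^-1 : R))).
  - by move=> it b; apply: bern_ge0.
  - by move=> it; apply: bern_sum.
  - by move=> it b _; rewrite invr_gt0.
under eq_bigr do rewrite dterm_half //.
rewrite sum_pair /=; under eq_bigr do rewrite sumr_const card_ord.
under eq_bigr do rewrite -mulr_natl.
rewrite -mulr_sumr sumrB sumr_const card_ord.
by [].
Qed.

Lemma D1 w : \sum_o dterm (P1 w o) (Q1 o) = n%:R * (K%:R - \sum_i Hb (pd i)).
Proof.
rewrite sum_pair.
under eq_bigr => z _ do under eq_bigr => y _ do rewrite /P1 /Q1 /= dtermZ ?noise_prob_ge0 //.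
under eq_bigr => z _ do rewrite -big_distrr /=
  [X in _ * X](reindex_inj (can_inj (xorfK (relay_out w z)))) /=.
under eq_bigr => z _ do under eq_bigr => j _ do rewrite xorfK.
under eq_bigr do rewrite dsum_noise.
by rewrite -big_distrl /= noise_prob_sum mul1r.
Qed.

End Bound1.


Section Avg.
Variable R : realType.

Lemma bern_avg (M : nat) (b : 'I_M -> bool) (u : bool) : (0 < M)%N ->
  bern (M%:R^-1 * \sum_w (b w)%:R) u = M%:R^-1 * \sum_w ((b w == u)%:R : R).
Proof.
move=> M0; have Mp : (M%:R : R) != 0 by rewrite pnatr_eq0 -lt0n.
case: u => /=.
  by congr (_ * _); apply: eq_bigr => w _; rewrite eqb_id.
have -> : \sum_w ((b w == false)%:R : R) = \sum_w (1 - (b w)%:R).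
  by apply: eq_bigr => w _; case: (b w); rewrite /= ?subrr ?subr0.
by rewrite sumrB sumr_const card_ord mulrBr -mulr_natr mul1r mulVf.
Qed.

Lemma avg_bool (M : nat) (b : 'I_M -> bool) (F : bool -> R) : (0 < M)%N ->
  M%:R^-1 * \sum_w F (b w) =
  \sum_u bern (M%:R^-1 * \sum_w (b w)%:R) u * F u.
Proof.
move=> M0.
transitivity (\sum_u (M%:R^-1 * \sum_w ((b w == u)%:R : R)) * F u); last first.
  by apply: eq_bigr => u _; rewrite bern_avg.
under [RHS]eq_bigr do rewrite -mulrA mulr_suml.
rewrite -mulr_sumr exchange_big /=; congr (_ * _); apply: eq_bigr => w _.
by under eq_bigr do rewrite mulrC; rewrite sum_pick.
Qed.

Lemma bern_avg_ge0 (M : nat) (b : 'I_M -> bool) (u : bool) : (0 < M)%N ->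
  0 <= bern ((M%:R^-1 : R) * \sum_w (b w)%:R) u.
Proof.
move=> M0; rewrite bern_avg // mulr_ge0 ?invr_ge0 ?ler0n //.
by apply: sumr_ge0 => w _; rewrite ler0n.
Qed.

Lemma bern_avg_gt0 (M : nat) (b : 'I_M -> bool) w : (0 < M)%N ->
  0 < bern ((M%:R^-1 : R) * \sum_w (b w)%:R) (b w).
Proof.
move=> M0; rewrite bern_avg // mulr_gt0 ?invr_gt0 ?ltr0n //.
rewrite (bigD1 w) //= eqxx ltr_pwDl // sumr_ge0 // => i _; exact: ler0n.
Qed.

End Avg.


Section Bound2.
Variable R : realType.
Variables (K M n : nat) (c : Defs.code K M n) (ps pd : 'I_K -> R).
Hypothesis hps : forall i, 0 <= ps i <= 1.
Hypothesis hpd : forall i, 0 <= pd i <= 1.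
Hypothesis M0 : (0 < M)%N.

Definition Wk (u : bool) (s : {ffun 'I_K -> bool}) : R :=
  \prod_i bern (ps i) (addb u (s i)).
Definition qt (t : 'I_n) : R := M%:R^-1 * \sum_w (src_enc c w t)%:R.
Definition mt (t : 'I_n) (s : {ffun 'I_K -> bool}) : R := margV ps (qt t) s.
Definition sl (w : 'I_M) (z : noise K n) : {ffun 'I_n -> {ffun 'I_K -> bool}} :=
  [ffun t => [ffun i => addb (src_enc c w t) (z (i, t))]].
Definition zs (w : 'I_M) (v : {ffun 'I_n -> {ffun 'I_K -> bool}}) : noise K n :=
  [ffun it => addb (src_enc c w it.2) (v it.2 it.1)].
Definition Phi2 (w : 'I_M) (om : noise K n * noise K n) := (om.2, sl w om.1).
Definition g2 (o : noise K n * {ffun 'I_n -> {ffun 'I_K -> bool}}) :=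
  decoder c [ffun it : 'I_K * 'I_n => addb (relay_enc c it.1 it.2
      (trunc it.2 [ffun t => o.2 t it.1])) (o.1 it)].
Definition Q2 (o : noise K n * {ffun 'I_n -> {ffun 'I_K -> bool}}) : R :=
  noise_prob pd o.1 * \prod_t mt t (o.2 t).
Definition P2 (w : 'I_M) (o : noise K n * {ffun 'I_n -> {ffun 'I_K -> bool}}) : R :=
  noise_prob pd o.1 * \prod_t Wk (src_enc c w t) (o.2 t).

Lemma g2_Phi2 w z e : g2 (Phi2 w (z, e)) = decoder c (dest_out c w z e).
Proof.
rewrite /g2 /Phi2 /=; congr (decoder c _); apply/ffunP => it; rewrite !ffunE.
congr (addb (relay_enc c _ _ (trunc _ _)) _).
by apply/ffunP => t; rewrite !ffunE.
Qed.

Lemma sl_eq w z v : (sl w z == v) = (z == zs w v).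
Proof.
apply/eqP/eqP => [<-|->].
  by apply/ffunP => -[i t]; rewrite !ffunE addKb.
by apply/ffunP => t; apply/ffunP => i; rewrite !ffunE addKb.
Qed.

Lemma Pz_zs w v : noise_prob ps (zs w v) = \prod_t Wk (src_enc c w t) (v t).
Proof.
rewrite /noise_prob prod_pair exchange_big /=; apply: eq_bigr => t _.
by apply: eq_bigr => i _; rewrite ffunE.
Qed.

Lemma hP2 w o : P2 w o = \sum_om rho ps pd om * (Phi2 w om == o)%:R.
Proof.
case: o => e' v; rewrite sum_pair /P2 /= -Pz_zs mulrC.
transitivity (\sum_z noise_prob ps z * (z == zs w v)%:R *
    \sum_e noise_prob pd e * (e == e')%:R).
  rewrite (bigD1 (zs w v)) //= eqxx mulr1 [X in _ + X]big1 ?addr0; last first.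
    by move=> z hz; rewrite (negbTE hz) mulr0 mul0r.
  by congr (_ * _); under eq_bigr do rewrite eq_sym; rewrite sum_pick.
apply: eq_bigr => z _; rewrite big_distrr /=; apply: eq_bigr => e _.
rewrite /rho /Phi2 /= xpair_eqE sl_eq.
by case: (z == _); case: (e == e'); rewrite /= ?mulr0 ?mulr1 ?mul0r.
Qed.

Lemma Wk_ge0 u s : 0 <= Wk u s.
Proof. by apply: prodr_ge0 => i _; apply: bern_ge0. Qed.

Lemma Wk_sum u : \sum_s Wk u s = 1.
Proof.
by apply: (prod_sum1 (p := fun i x => bern (ps i) (addb u x))) => i; apply: bern_sumx.
Qed.

Lemma qt_ge0 t u : 0 <= bern (qt t) u.
Proof. exact: bern_avg_ge0. Qed.

Lemma mt_ge0 t s : 0 <= mt t s.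
Proof. by apply: sumr_ge0 => u _; rewrite mulr_ge0 ?qt_ge0 ?Wk_ge0. Qed.

Lemma mt_sum t : \sum_s mt t s = 1.
Proof.
rewrite /mt /margV exchange_big /=.
under eq_bigr do rewrite /jointUV -big_distrr /= (Wk_sum _) mulr1.
exact: bern_sum.
Qed.

Lemma mt_pos w t s : Wk (src_enc c w t) s != 0 -> 0 < mt t s.
Proof.
move=> h; rewrite /mt /margV (bigD1 (src_enc c w t)) //=.
rewrite ltr_pwDl ?sumr_ge0 // => [|u _]; last by rewrite mulr_ge0 ?qt_ge0 ?Wk_ge0.
rewrite mulr_gt0 //; first by have := @bern_avg_gt0 R M (fun w => src_enc c w t) w M0.
have := Wk_ge0 (src_enc c w t) s; rewrite /Wk in h * => h0.
by rewrite lt_def h h0.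
Qed.

Lemma Q2_ge0 o : 0 <= Q2 o.
Proof. by rewrite mulr_ge0 ?noise_prob_ge0 // prodr_ge0 // => t _; apply: mt_ge0. Qed.

Lemma Q2_sum : \sum_o Q2 o = 1.
Proof.
have hs : \sum_(v : {ffun 'I_n -> {ffun 'I_K -> bool}}) \prod_t mt t (v t) = 1.
  exact: (prod_sum1 (p := mt)) mt_sum.
rewrite sum_pair; under eq_bigr do rewrite /Q2 /= -big_distrr /= hs mulr1.
exact: noise_prob_sum.
Qed.

Lemma hpos2 w o : P2 w o != 0 -> 0 < Q2 o.
Proof.
rewrite /P2 /Q2 mulf_eq0 negb_or => /andP[h1 h2].
rewrite mulr_gt0 //; first by rewrite lt_def h1 noise_prob_ge0.
apply: prodr_gt0 => t _; apply: (mt_pos (w := w)).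
by apply/eqP => ht; move: h2; rewrite (bigD1 t) //= ht mul0r eqxx.
Qed.

Lemma D2w w : \sum_o dterm (P2 w o) (Q2 o) =
  \sum_t \sum_s dterm (Wk (src_enc c w t) s) (mt t s).
Proof.
rewrite sum_pair.
under eq_bigr => e _ do under eq_bigr => v _ do rewrite /P2 /Q2 /= dtermZ ?noise_prob_ge0 //.
under eq_bigr do rewrite -big_distrr /=.
transitivity (\sum_(e : noise K n) noise_prob pd e *
   \sum_t \sum_s dterm (Wk (src_enc c w t) s) (mt t s)).
  apply: eq_bigr => e _; congr (_ * _).
  apply: (dterm_prod (p := fun t s => Wk (src_enc c w t) s) (m := mt)).
  - by move=> t s; apply: Wk_ge0.
  - by move=> t; apply: Wk_sum.
  - by move=> t s h; apply: (mt_pos (w := w)).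
by rewrite -big_distrl /= noise_prob_sum mul1r.
Qed.

Lemma mi_eq t : \sum_u bern (qt t) u * \sum_s dterm (Wk u s) (mt t s)
   = mutual_info_UV ps (qt t).
Proof.
rewrite /mutual_info_UV; apply: eq_bigr => u _; rewrite big_distrr /=.
apply: eq_bigr => s _; rewrite -dtermZ ?qt_ge0 //.
Qed.

Lemma D2 : M%:R^-1 * \sum_w \sum_o dterm (P2 w o) (Q2 o) =
  \sum_t mutual_info_UV ps (qt t).
Proof.
under eq_bigr do rewrite D2w.
rewrite exchange_big /= mulr_sumr; apply: eq_bigr => t _.
rewrite -mi_eq.
exact: (avg_bool (fun w => src_enc c w t) (fun u => \sum_s dterm (Wk u s) (mt t s)) M0).
Qed.

End Bound2.


Section MIbound.
Variable R : realType.
Variables (K : nat) (ps : 'I_K -> R).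
Hypothesis hps : forall i, 0 <= ps i <= 1.

Lemma mi_term_le (q : R) u s : 0 <= q <= 1 ->
  (if jointUV ps q u s == 0 then 0
   else jointUV ps q u s * log2 (jointUV ps q u s / (bern q u * margV ps q s)))
  <= Wk ps u s / ln 2.
Proof.
move=> hq.
have l2 := @ln2_gt0 R.
have a0 := bern_ge0 u hq.
have W0 := Wk_ge0 hps u s.
have hm : bern q u * Wk ps u s <= margV ps q s.
  rewrite /margV (bigD1 u) //= ler_wpDr //.
  by apply: sumr_ge0 => u' _; rewrite mulr_ge0 ?(bern_ge0 _ hq) ?Wk_ge0.
rewrite /jointUV -/(Wk ps u s).
case: eqP => [_|/eqP hne]; first by rewrite divr_ge0 // ltW.
have [an0 Wn0] : bern q u != 0 /\ Wk ps u s != 0.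
  by move: hne; rewrite mulf_eq0 negb_or => /andP.
have ap : 0 < bern q u by rewrite lt_def an0 a0.
have Wp : 0 < Wk ps u s by rewrite lt_def Wn0 W0.
have mp : 0 < margV ps q s by apply: lt_le_trans hm; rewrite mulr_gt0.
set a := bern q u in ap an0 a0 hm *; set W := Wk ps u s in Wp Wn0 W0 hm *.
set m := margV ps q s in mp hm *.
have xp : 0 < a * W / (a * m) by rewrite divr_gt0 ?mulr_gt0.
have hx : ln (a * W / (a * m)) <= a * W / (a * m).
  by apply: (letr (ln_le_sub1 _ xp)); rewrite lerBlDr lerDl.
rewrite /log2 mulrA ler_pM2r ?invr_gt0 //.
apply: (letr (b := a * W * (a * W / (a * m)))).
  by rewrite ler_pM2l ?mulr_gt0.
have -> : a * W * (a * W / (a * m)) = W * (a * W / m).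
  by field; rewrite !gt_eqF.
rewrite -[leRHS]mulr1 ler_pM2l // ler_pdivrMr // mul1r.
exact: hm.
Qed.

Lemma mi_bound (q : R) : 0 <= q <= 1 -> mutual_info_UV ps q <= 2 / ln 2.
Proof.
move=> hq; rewrite /mutual_info_UV.
apply: (letr (b := \sum_(u : bool) \sum_(s : {ffun 'I_K -> bool}) Wk ps u s / ln 2)).
  by apply: ler_sum => u _; apply: ler_sum => s _; apply: mi_term_le.
under eq_bigr do rewrite -big_distrl /= Wk_sum //.
by rewrite big_bool /= -mulrDl.
Qed.

End MIbound.


Section Final.
Variable R : realType.
Variables (K : nat) (ps pd : 'I_K -> R).
Hypothesis hps : forall i, 0 <= ps i <= 1.
Hypothesis hpd : forall i, 0 <= pd i <= 1.

Definition MIset : set R := fun x => exists2 q : R, 0 <= q <= 1 & x = mutual_info_UV ps q.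

Lemma MIset_sup : has_sup MIset.
Proof.
split; first by exists (mutual_info_UV ps 0); exists 0 => //; rewrite lexx ler01.
exists (2 / ln 2) => x [q hq ->]; exact: mi_bound.
Qed.

Lemma mi_le_sup q : 0 <= q <= 1 -> mutual_info_UV ps q <= sup MIset.
Proof. by move=> hq; apply: (sup_upper_bound MIset_sup); exists q. Qed.

Lemma pc_eq (M n : nat) (c : Defs.code K M n)
  (G : 'I_M -> noise K n * noise K n -> 'I_M) :
  (0 < M)%N ->
  (forall w z e, G w (z, e) = decoder c (dest_out c w z e)) ->
  M%:R^-1 * \sum_w \sum_om rho ps pd om * (G w om == w)%:R = 1 - err_prob ps pd c.
Proof.
move=> M0 hG.
have Mp : (M%:R : R) != 0 by rewrite pnatr_eq0 -lt0n.
rewrite /err_prob.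
have -> : \sum_w \sum_om rho ps pd om * (G w om == w)%:R =
    \sum_(w < M) (1 - \sum_(z : noise K n) \sum_(e : noise K n)
     noise_prob ps z * noise_prob pd e * (decoder c (dest_out c w z e) != w)%:R).
  apply: eq_bigr => w _.
  rewrite -[X in X - _](rho_sum n ps pd) !sum_pair -sumrB; apply: eq_bigr => z _.
  rewrite -sumrB; apply: eq_bigr => e _.
  by rewrite hG /rho /=; case: (_ == w); rewrite /= ?mulr1 ?mulr0 ?subr0 ?subrr.
by rewrite sumrB sumr_const card_ord mulrBr -mulr_natr mul1r mulVf.
Qed.

Lemma code_bound (n M : nat) (c : Defs.code K M n) : (0 < M)%N ->
  (1 - err_prob ps pd c) * log2 M%:R - 1 <= n%:R * (K%:R - \sum_i Hb (pd i)) /\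
  (1 - err_prob ps pd c) * log2 M%:R - 1 <= n%:R * sup MIset.
Proof.
move=> M0.
have Mp : (M%:R : R) != 0 by rewrite pnatr_eq0 -lt0n.
split.
  rewrite -(pc_eq (G := fun w om => g1 c (Phi1 c w om)) M0) //.
  have := fano_gen (g1 c) M0 (rho_ge0 hps hpd) (rho_sum n ps pd) (Q1_ge0 hps)
     _ (hP1 c ps pd) (hpos1 (c := c) (pd := pd) hps).
  rewrite (Q1_sum n ps) lexx => /(_ isT).
  under [X in _ <= _ * X -> _]eq_bigr do rewrite (D1 c hps hpd).
  rewrite sumr_const card_ord => h; apply: (letr h).
  rewrite -[X in _ * X]mulr_natl.
  by rewrite mulrA mulVf // mul1r.
rewrite -(pc_eq (G := fun w om => g2 c (Phi2 c w om)) M0) //; last first.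
  move=> w z e; exact: g2_Phi2.
have := fano_gen (g2 c) M0 (rho_ge0 hps hpd) (rho_sum n ps pd) (Q2_ge0 c hps hpd M0)
     _ (hP2 c ps pd) (hpos2 hps hpd M0).
rewrite (Q2_sum c ps pd) lexx (D2 c hps hpd M0) => /(_ isT) h.
apply: (letr h).
have -> : n%:R * sup MIset = \sum_(t < n) sup MIset by rewrite sumr_const card_ord mulr_natl.
apply: ler_sum => t _.
apply: mi_le_sup.
have h1 := qt_ge0 R c M0 t true; have h2 := qt_ge0 R c M0 t false.
rewrite /= subr_ge0 in h1 h2; by rewrite h1 h2.
Qed.

End Final.


Section Limit.
Variable R : realType.
Variables (K : nat) (ps pd : 'I_K -> R).

Lemma conv_limit (B r : R) : achievable ps pd r ->
  (forall n M (c : Defs.code K M n), (0 < M)%N ->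
      (1 - err_prob ps pd c) * log2 M%:R - 1 <= n%:R * B) -> r <= B.
Proof.
move=> ach hb; rewrite leNgt; apply/negP => hBr.
have l2 := @ln2_gt0 R.
set d0 := r - B.
have d0p : 0 < d0 by rewrite /d0 subr_gt0.
have den : 0 < 2 * (`|r| + d0) by rewrite mulr_gt0 // ltr_wpDl.
set eps := d0 / (2 * (`|r| + d0)).
have ep : 0 < eps by rewrite divr_gt0.
have eh : eps <= 2^-1.
  rewrite /eps ler_pdivrMr // mulrA mulVf // mul1r lerDr //.
have er : eps * r <= d0 / 2.
  apply: (letr (b := eps * (`|r| + d0))).
    by rewrite ler_pM2l // (le_trans (ler_norm r)) // lerDl ltW.
  have hz : `|r| + d0 != 0 by rewrite gt_eqF // ltr_wpDl.
  by rewrite le_eqVlt; apply/orP; left; apply/eqP; rewrite /eps; field.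
set d := (1 - eps) * r - B.
have dp : 0 < d.
  have -> : d = d0 - eps * r by rewrite /d /d0; ring.
  lra.
have [N hN] := ach eps ep.
set nn := maxn N (Num.truncn d^-1).+1.
have [M [c [h2 hPe]]] := hN nn (leq_maxl _ _).
have Mp : (0 : R) < M%:R by apply: lt_le_trans h2; apply: powR_gt0.
have M0 : (0 < M)%N by rewrite -(ltr0n R).
have hb' := hb nn M c M0.
set L := log2 (M%:R : R) in hb'.
have hL : nn%:R * r <= L.
  rewrite /L /log2 ler_pdivlMr // -ln_powR ler_ln ?posrE ?powR_gt0 //.
have hL0 : 0 <= L.
  by rewrite /L /log2 divr_ge0 ?ln_ge0 ?ler1n // ltW.
have c1 : (1 - eps) * (nn%:R * r) <= (1 - err_prob ps pd c) * L.
  apply: (letr (b := (1 - eps) * L)).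
    by rewrite ler_wpM2l // subr_ge0 (le_trans eh) // invf_le1 ?ler1n.
  by rewrite ler_wpM2r // lerB.
have c2 : nn%:R * d <= 1.
  have -> : nn%:R * d = (1 - eps) * (nn%:R * r) - nn%:R * B by rewrite /d; ring.
  lra.
have c3 : d^-1 < nn%:R.
  apply: (lt_le_trans (Num.Theory.truncnS_gt _)).
  by rewrite ler_nat leq_maxr.
move: c3; rewrite -div1r ltr_pdivrMr // => c3.
lra.
Qed.

End Limit.


Unset Implicit Arguments. Set Strict Implicit.

Lemma ach0 (R : realType) (K : nat) (ps pd : 'I_K -> R) : achievable ps pd 0.
Proof.
move=> eps ep; exists 0%N => n _.
exists 1%N, (Code (fun (_ : 'I_1) (_ : 'I_n) => false)
   (fun (_ : 'I_K) (_ : 'I_n) (_ : {ffun 'I_n -> bool}) => false)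
   (fun _ => ord0)); split.
  by rewrite mulr0 powRr0.
rewrite /err_prob big1 ?mulr0 ?ltW // => w _.
rewrite big1 // => z _; rewrite big1 // => e _.
by rewrite /= (ord1 w) eqxx mulr0.
Qed.

Theorem theorem1 (R : realType) (K : nat) (ps pd : 'I_K -> R)
  (hK : (1 <= K)%N)
  (hps : forall i, 0 <= ps i <= 2^-1)
  (hpd : forall i, 0 <= pd i <= 2^-1) :
  capacity ps pd <= Rub ps pd /\
  (forall rate : R, achievable ps pd rate -> rate <= Rub ps pd).
Proof.
have h21 : (2^-1 : R) <= 1 by rewrite invf_le1 ?ler1n.
have hps' : forall i, 0 <= ps i <= 1.
  by move=> i; case/andP: (hps i) => h1 h2; rewrite h1 (le_trans h2).
have hpd' : forall i, 0 <= pd i <= 1.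
  by move=> i; case/andP: (hpd i) => h1 h2; rewrite h1 (le_trans h2).
have part2 : forall rate : R, achievable ps pd rate -> rate <= Rub ps pd.
  move=> r hr; rewrite /Rub le_min; apply/andP; split.
    apply: (conv_limit hr) => n M c M0.
    by case: (code_bound hps' hpd' c M0).
  apply: (conv_limit hr) => n M c M0.
  by case: (code_bound hps' hpd' c M0).
split => //.
apply: ge_sup; first by exists 0; apply: ach0.
by move=> r hr; apply: part2.
Qed.
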